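(* Suppose that $k \mid n$, and that $J$ is a $k$-system on $n$ vertices with $$\delta(J) \geq \left(n, (k-1)n/k, (k-2)n/k, \dots, n/k \right).$$ Then $J_k$ admits a fractional perfect matching.
   Context: A $k$-system is a hypergraph $J$ (identified with its edge set) with every edge of size at most $k$ and $\emptyset\in J$; $J_r$ is the $r$-graph of edges of size $r$. The degree $d(e)$ of an edge $e$ is the number of edges of size $|e|+1$ containing $e$; $\delta_r(J)$ is the minimum of $d(e)$ over edges of size $r$; $\delta(J)=(\delta_0(J),\dots,\delta_{k-1}(J))$, compared pointwise. A fractional perfect matching in a hypergraph $H$ is an assignment of weights $w_e\ge 0$ to the edges of $H$ such that for every vertex $v$, $\sum_{e\ni v} w_e=1$. *)

(* Defs.v *)
From mathcomp Require Import all_boot all_order all_algebra.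
Set Implicit Arguments. Unset Strict Implicit. Unset Printing Implicit Defensive.
Import Order.TTheory GRing.Theory Num.Theory.

(* A hypergraph on vertex set 'I_n is identified with its edge set
   J : {set {set 'I_n}}. *)

Definition k_system (n k : nat) (J : {set {set 'I_n}}) : Prop :=
  set0 \in J /\ (forall e, e \in J -> #|e| <= k).

Definition layer (n r : nat) (J : {set {set 'I_n}}) : {set {set 'I_n}} :=
  [set e in J | #|e| == r].

Definition deg (n : nat) (J : {set {set 'I_n}}) (e : {set 'I_n}) : nat :=
  #|[set f in J | (e \subset f) && (#|f| == #|e|.+1)]|.

(* delta(J) >= (n, (k-1)n/k, ..., n/k): for each r < k, every edge of size r
   has degree at least (k - r) n / k  (i.e. delta_r(J) >= (k-r)n/k, the minimum
   being taken over edges of size r). *)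
Definition min_degree_cond (n k : nat) (J : {set {set 'I_n}}) : Prop :=
  forall e, e \in J -> #|e| < k -> (k - #|e|) * n %/ k <= deg J e.

Definition fractional_perfect_matching (R : numDomainType) (n : nat)
    (H : {set {set 'I_n}}) (w : {set 'I_n} -> R) : Prop :=
  (forall e, e \in H -> 0 <= w e)%R /\
  (forall v : 'I_n, \sum_(e in H | v \in e) w e = 1)%R.

(* Main.v *)
Require Import Defs.
From mathcomp Require Import all_boot all_order all_algebra.
From mathcomp Require Import ring lra zify.
Set Implicit Arguments. Unset Strict Implicit. Unset Printing Implicit Defensive.
Import Order.TTheory GRing.Theory Num.Theory.

Section F.
Local Open Scope ring_scope.
Variable R : realFieldType.
Variable n : nat.
Definition dot (y v : 'I_n -> R) := \sum_j y j * v j.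

Lemma dotBr y u v s : dot y (fun j => u j - s * v j) = dot y u - s * dot y v.
Proof. rewrite /dot mulr_sumr -sumrB; apply: eq_bigr => j _; ring. Qed.

Lemma dotBl z y v s : dot (fun j => z j - s * y j) v = dot z v - s * dot y v.
Proof. rewrite /dot mulr_sumr -sumrB; apply: eq_bigr => j _; ring. Qed.

Lemma farkas p : forall (A : nat -> 'I_n -> R) (b : 'I_n -> R),
  (exists lam : nat -> R, (forall i, 0 <= lam i) /\
      forall j, b j = \sum_(i < p) lam i * A i j)
  \/ (exists y, (forall i, (i < p)%N -> 0 <= dot y (A i)) /\ dot y b < 0).
Proof.
elim: p => [|p IH] A b.
  case: (boolP [forall j, b j == 0]) => [/forallP hb|].
    left; exists (fun _ => 0); split => // j; rewrite big_ord0; exact/eqP.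
  rewrite negb_forall => /existsP [j0 hj0].
  right; exists (fun j => if j == j0 then - b j0 else 0); split => [i|].
    by rewrite ltn0.
  rewrite /dot (bigD1 j0) //= eqxx big1 => [|j /negbTE ->]; last by rewrite mul0r.
  rewrite addr0 mulNr oppr_lt0; by rewrite lt_def sqr_ge0 -expr2 sqrf_eq0 hj0.
have [[lam [l0 hl]]|[y [hy hyb]]] := IH (fun i => A i.+1) b.
  left; exists (fun i => if i is i'.+1 then lam i' else 0); split.
    by case.
  by move=> j; rewrite big_ord_recl /= mul0r add0r hl.
case: (leP 0 (dot y (A 0%N))) => hc.
  right; exists y; split => //; case => // i /=; exact: hy.
set c := dot y (A 0%N).
have cn0 : c != 0 by rewrite lt_eqF.
pose A2 i j := A i.+1 j - (dot y (A i.+1) / c) * A 0%N j.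
pose b2 j := b j - (dot y b / c) * A 0%N j.
have [[mu [m0 hm]]|[z [hz hzb]]] := IH A2 b2.
  left.
  pose l0 := (dot y b - \sum_(i < p) mu i * dot y (A i.+1)) / c.
  exists (fun i => if i is i'.+1 then mu i' else l0); split.
    case => // ; rewrite /l0 nmulr_lge0 ?invr_lt0 //.
    have : 0 <= \sum_(i < p) mu i * dot y (A i.+1).
      by apply: sumr_ge0 => i _; apply: mulr_ge0 => //; apply: hy.
    lra.
  move=> j; rewrite big_ord_recl /=.
  have := hm j; rewrite /b2 /A2 => hmj.
  have e : \sum_(i < p) mu i * (A i.+1 j - dot y (A i.+1) / c * A 0%N j)
     = \sum_(i < p) mu i * A i.+1 j - (\sum_(i < p) mu i * dot y (A i.+1)) / c * A 0%N j.
    rewrite !mulr_suml -sumrB; apply: eq_bigr => i _; ring.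
  rewrite e in hmj.
  have -> : \sum_(i < p) mu (0 + i)%N * A (bump 0 i) j = \sum_(i < p) mu i * A i.+1 j by [].
  rewrite /l0. move: hmj.
  set S1 := \sum_(i < p) mu i * A i.+1 j.
  set S2 := \sum_(i < p) mu i * dot y (A i.+1).
  move=> hmj.
  have -> : b j = S1 - S2 / c * A 0%N j + dot y b / c * A 0%N j.
    by rewrite -hmj; ring.
  ring.
right; exists (fun j => z j - (dot z (A 0%N) / c) * y j); split.
  case => [_|i hi]; rewrite dotBl.
    by rewrite -/c divfK // subrr.
  have := hz i hi; rewrite /A2 dotBr => h.
  have -> : dot z (A i.+1) - dot z (A 0%N) / c * dot y (A i.+1)
         = dot z (A i.+1) - dot y (A i.+1) / c * dot z (A 0%N) by ring.
  exact: h.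
rewrite dotBl.
move: hzb; rewrite /b2 dotBr.
have -> : dot z b - dot z (A 0%N) / c * dot y b
       = dot z b - dot y b / c * dot z (A 0%N) by ring.
by [].
Qed.
End F.

Lemma count_index_enum n (P : pred 'I_n) : count P (index_enum 'I_n) = #|P|.
Proof. by rewrite -size_filter deprecated_filter_index_enum cardE. Qed.

Lemma size_index_enum n : size (index_enum 'I_n) = n.
Proof. by rewrite -(count_predT (index_enum _)) count_index_enum card_ord. Qed.

Lemma greedy (R : realFieldType) n k (J : {set {set 'I_n}}) (y : 'I_n -> R) :
  (0 < n)%N -> (k %| n)%N -> k_system k J -> min_degree_cond k J ->
  (forall e, e \in layer k J -> (0 <= \sum_(v in e) y v)%R) -> (0 <= \sum_v y v)%R.
Proof.
move=> n0 kn [J0 Jk] Jdeg Hy.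
have k0 : (0 < k)%N.
  by case: k kn {Jk Jdeg Hy} => // /[!dvd0n] /eqP n00; rewrite n00 in n0.
set m := n %/ k.
have hn : n = (k * m)%N by rewrite mulnC divnK.
have m0 : (0 < m)%N by move: n0; rewrite hn muln_gt0 => /andP[].
set s := sort <=%O (map y (index_enum 'I_n)).
have ss : sorted <=%O s by apply: sort_sorted; exact: le_total.
have sperm : perm_eq s (map y (index_enum 'I_n)) by rewrite /s perm_sort.
have ssz : size s = n by rewrite size_sort size_map size_index_enum.
pose t r := nth 0%R s (r * m).
have claimA : forall r, (r < k)%N -> forall X : {set 'I_n}, (n - r * m <= #|X|)%N ->
    exists2 u, u \in X & (y u <= t r)%R.
  move=> r rk X hX.
  case: (boolP [exists u in X, (y u <= t r)%R]) => [/existsP [u /andP [uX hu]]|hne].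
    by exists u.
  exfalso.
  have hc : (count (<= t r)%O s <= r * m)%N.
    rewrite (permP sperm) count_map.
    have -> : count (preim y (<= t r)%O) (index_enum 'I_n) = #|[pred v | (y v <= t r)%R]|.
      by rewrite -count_index_enum.
    have : (#|[pred v | (y v <= t r)%R]| <= #|~: X|)%N.
      apply: subset_leq_card; apply/subsetP => v /=; rewrite inE => hv.
      apply: contraT; rewrite in_setC negbK => vX; move: hne; rewrite negb_exists => /forallP /(_ v).
      by rewrite vX hv.
    have := cardsC X; rewrite card_ord. lia.
  have rmn : (r * m < n)%N by rewrite hn; nia.
  have := @nth_count_gt _ _ (t r) 0%R s (r * m)%N ss; rewrite hc ssz rmn /= => /(_ isT).
  by rewrite ltxx.
have claimB : forall r, (r <= k)%N ->
    ((\sum_(q < r) t q) *+ m <= \sum_(0 <= i < r * m) nth 0%R s i)%R.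
  elim => [|r IH] hr.
    by rewrite big_ord0 mul0rn mul0n big_geq.
  rewrite big_ord_recr /= mulrnDl mulSnr (big_cat_nat _ (n := (r * m)%N)) //=; last by lia.
  apply: lerD; first by apply: IH; lia.
  have -> : (t r *+ m = \sum_(r * m <= i < r * m + m) t r)%R by rewrite sumr_const_nat addKn.
  apply: ler_sum_nat => i /andP [h1 h2].
  apply: (le_sorted_leq_nth 0%R ss) => //; rewrite inE ssz; nia.
have claimC : forall r, (r <= k)%N -> exists2 e, e \in J &
    (#|e| == r) && (\sum_(v in e) y v <= \sum_(q < r) t q)%R.
  elim => [|r IH] hr.
    by exists set0 => //; rewrite cards0 big_set0 big_ord0 lexx.
  have [e eJ /andP[/eqP ce he]] := IH (ltnW hr).
  have hdeg := Jdeg e eJ (ltac:(by rewrite ce)).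
  have hq : ((k - r) * n %/ k = (k - r) * m)%N by rewrite hn mulnCA mulKn.
  rewrite ce hq /deg in hdeg.
  set F := [set f in J | (e \subset f) && (#|f| == #|e|.+1)] in hdeg.
  set X := [set u | (u |: e) \in F].
  have FX : F \subset (fun u => u |: e) @: X.
    apply/subsetP => f; rewrite inE => /andP [fJ /andP [ef cf]].
    have : (0 < #|f :\: e|)%N by rewrite cardsD (setIidPr ef) (eqP cf) subSnn.
    rewrite card_gt0 => /set0Pn [u]; rewrite inE => /andP [ue uf].
    have cu : #|u |: e| = #|e|.+1 by rewrite cardsU1 ue.
    have fe : u |: e = f.
      by apply/eqP; rewrite eqEcard subUset sub1set uf ef /= (eqP cf) cu.
    by apply/imsetP; exists u => //; rewrite inE fe inE fJ ef cf.
  have hX : (n - r * m <= #|X|)%N.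
    have h1 := subset_leq_card FX.
    have h2 := leq_imset_card (fun u => u |: e) X.
    have h3 : ((k - r) * m = k * m - r * m)%N by rewrite mulnBl.
    have h4 : (n - r * m = (k - r) * m)%N by rewrite h3 -hn.
    rewrite h4; exact: leq_trans hdeg (leq_trans h1 h2).
  have [u uX hu] := claimA r hr X hX.
  move: uX; rewrite inE inE => /andP [uJ /andP [_ cu]].
  case: (boolP (u \in e)) => ue.
    by move: cu; rewrite cardsU1 ue /= => /eqP; lia.
  exists (u |: e) => //.
  rewrite (eqP cu) ce eqxx /= big_setU1 //= big_ord_recr /=.
  lra.
have [e eJ /andP [/eqP ce he]] := claimC k (leqnn k).
have ek : e \in layer k J by rewrite inE eJ ce eqxx.
have h1 := Hy e ek.
have h2 := claimB k (leqnn k).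
have tot : (\sum_v y v = \sum_(x <- s) x)%R by rewrite (perm_big _ sperm) big_map.
have e1 : (\sum_(x <- s) x = \sum_(0 <= i < k * m) nth 0%R s i)%R.
  by rewrite -hn -ssz (big_nth 0%R).
rewrite tot e1; apply: le_trans h2.
by apply: mulrn_wge0; apply: le_trans he.
Qed.

Theorem lemma3p6 (R : realFieldType) (n k : nat) (J : {set {set 'I_n}}) :
  k %| n ->
  k_system k J ->
  min_degree_cond k J ->
  exists w : {set 'I_n} -> R, fractional_perfect_matching (layer k J) w.
Proof.
move=> kn ks kd.
case: (posnP n) => [n0|n0].
  exists (fun _ => 0%R); split => [e _|[i hi]]; first exact: lexx.
  exfalso; suff : (i < 0)%N by [].
  by rewrite -[X in (i < X)%N]n0.
pose es := enum {set 'I_n}.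
pose p := #|{set 'I_n}|.
have esz : size es = p by rewrite /es -cardT.
pose H := layer k J.
pose A (i : nat) (v : 'I_n) : R :=
  if nth set0 es i \in H then (if v \in nth set0 es i then 1%R else 0%R) else 0%R.
have reidx : forall F : {set 'I_n} -> R,
    (\sum_e F e = \sum_(i < p) F (nth set0 es i))%R.
  move=> F; rewrite -big_enum (big_nth set0) esz big_mkord //.
case: (farkas p A (fun _ => 1%R)) => [[lam [l0 hl]]|[y [hy hyb]]].
  exists (fun e => lam (index e es)); split => [e _|v]; first exact: l0.
  have := hl v => /= ->.
  rewrite big_mkcond reidx /=; apply: eq_bigr => i _.
  rewrite index_uniq ?esz ?enum_uniq // /A.
  by case: (nth set0 es i \in H); case: (v \in nth set0 es i);
    rewrite ?mulr1 ?mulr0.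
exfalso.
have := greedy (y := y) n0 kn ks kd.
have hyb' : (\sum_v y v < 0)%R.
  by move: hyb; rewrite /dot; under eq_bigr do rewrite mulr1.
suff : (forall e, e \in layer k J -> (0 <= \sum_(v in e) y v)%R).
  by move=> h /(_ h); rewrite leNgt hyb'.
move=> e eH.
have ein : e \in es by rewrite mem_enum.
have := hy (index e es); rewrite -esz index_mem => /(_ ein).
rewrite /dot /A nth_index // eH big_mkcond /=.
move=> h; apply: (le_trans h); rewrite le_eqVlt; apply/orP; left; apply/eqP.
rewrite [RHS]big_mkcond; apply: eq_bigr => v _; by case: (v \in e); rewrite ?mulr1 ?mulr0.
Qed.
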